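(* In $\mathbb{R}^2\otimes\mathbb{R}^2\otimes\mathbb{R}^2$ with standard orthonormal basis $e_1,e_2$ of $\mathbb{R}^2$, for $t\in\mathbb{R}$ let $f_t=e_2\otimes e_1\otimes e_1+e_1\otimes e_2\otimes e_1+e_1\otimes e_1\otimes e_2+t\,e_2\otimes e_2\otimes e_2$. Then (1) $\|f_t\|_\sigma=|t|$ if $t\ge2$ or $t\le-1$, and $\|f_t\|_\sigma=\frac{2}{\sqrt{3-t}}$ if $-1\le t\le2$; (2) $\|f_t\|_\star=3-t$ if $t\le\frac13$, and $\|f_t\|_\star=\frac{(1+t)^{3/2}}{\sqrt t}$ if $t\ge\frac13$.
   Context: The tensor space carries the inner product induced from the standard one, with euclidean norm $\|\cdot\|_2$. A simple tensor is one of the form $v_1\otimes v_2\otimes v_3$. The spectral norm is $\|T\|_\sigma=\max\{|\langle T,v\rangle|: v \text{ simple},\ \|v\|_2=1\}$. The nuclear norm $\|T\|_\star$ is the minimum of $\sum_{i=1}^r\|v_i\|_2$ over all expressions $T=v_1+\cdots+v_r$ with $v_i$ simple tensors. *)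

(* Defs.v *)
From Stdlib Require Import Reals List.
Open Scope R_scope.

(* Vectors of R^2: pairs (x1, x2); index false = e1, true = e2. *)
Definition vec2 := (R * R)%type.
Definition comp (v : vec2) (b : bool) : R := if b then snd v else fst v.
Definition e1 : vec2 := (1, 0).
Definition e2 : vec2 := (0, 1).

(* Tensors of R^2 (x) R^2 (x) R^2, as coefficient arrays in the standard basis. *)
Definition tensor := bool -> bool -> bool -> R.

Definition tsum (f : tensor) : R :=
  f false false false + f false false true + f false true false + f false true true +
  f true false false + f true false true + f true true false + f true true true.

Definition tinner (T U : tensor) : R := tsum (fun i j k => T i j k * U i j k).
Definition tnorm (T : tensor) : R := sqrt (tinner T T).

Definition tadd (T U : tensor) : tensor := fun i j k => T i j k + U i j k.
Definition tscale (c : R) (T : tensor) : tensor := fun i j k => c * T i j k.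
Definition tzero : tensor := fun _ _ _ => 0.

Definition simple3 (v1 v2 v3 : vec2) : tensor :=
  fun i j k => comp v1 i * comp v2 j * comp v3 k.

Definition is_simple (T : tensor) : Prop :=
  exists v1 v2 v3 : vec2, T = simple3 v1 v2 v3.

Definition is_max (P : R -> Prop) (m : R) : Prop := P m /\ forall x, P x -> x <= m.
Definition is_min (P : R -> Prop) (m : R) : Prop := P m /\ forall x, P x -> m <= x.

Definition spectral_values (T : tensor) (x : R) : Prop :=
  exists v : tensor, is_simple v /\ tnorm v = 1 /\ x = Rabs (tinner T v).
Definition is_spectral_norm (T : tensor) (s : R) : Prop := is_max (spectral_values T) s.

Definition tsum_list (l : list tensor) : tensor := fold_right tadd tzero l.
Definition nuclear_values (T : tensor) (x : R) : Prop :=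
  exists l : list tensor, Forall is_simple l /\ T = tsum_list l /\
    x = fold_right Rplus 0 (map tnorm l).
Definition is_nuclear_norm (T : tensor) (s : R) : Prop := is_min (nuclear_values T) s.

Definition f_t (t : R) : tensor :=
  tadd (simple3 e2 e1 e1) (tadd (simple3 e1 e2 e1)
    (tadd (simple3 e1 e1 e2) (tscale t (simple3 e2 e2 e2)))).

(* Main.v *)
Require Import Defs.
From Stdlib Require Import Reals List Lra Psatz FunctionalExtensionality.
Open Scope R_scope.

Definition Nv (a : vec2) : R := fst a * fst a + snd a * snd a.
Definition Fs (s : R) (a b c : vec2) : R :=
  snd a*fst b*fst c + fst a*snd b*fst c + fst a*fst b*snd c + s*snd a*snd b*snd c.

Lemma sqn (x : R) : 0 <= x*x.
Proof. nra. Qed.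

Lemma N_pos a : 0 <= Nv a.
Proof. unfold Nv; nra. Qed.

Lemma inner_f_simple s a b c : tinner (f_t s) (simple3 a b c) = Fs s a b c.
Proof. destruct a, b, c. unfold tinner, tsum, f_t, tadd, tscale, simple3, comp, e1, e2, Fs; simpl; ring. Qed.

Lemma norm_simple a b c : tnorm (simple3 a b c) = sqrt (Nv a * Nv b * Nv c).
Proof. unfold tnorm. f_equal. destruct a, b, c. unfold tinner, tsum, simple3, comp, Nv; simpl; ring. Qed.

Lemma inner_ff s t : tinner (f_t s) (f_t t) = 3 + s*t.
Proof. unfold tinner, tsum, f_t, tadd, tscale, simple3, comp, e1, e2; simpl; ring. Qed.

Lemma tinner_tadd g U V : tinner g (tadd U V) = tinner g U + tinner g V.
Proof. unfold tinner, tsum, tadd; ring. Qed.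

Lemma tinner_tzero g : tinner g tzero = 0.
Proof. unfold tinner, tsum, tzero; ring. Qed.

Lemma psd2 p q r y1 y2 : 0 <= p -> 0 <= r -> q*q <= p*r -> 0 <= p*y1*y1 + 2*q*y1*y2 + r*y2*y2.
Proof.
  intros Hp Hr Hq. destruct (Req_dec p 0) as [E|E].
  - subst. assert (q = 0) by nra. subst. nra.
  - assert (0 < p) by lra.
    apply (Rmult_le_reg_l p); auto. rewrite Rmult_0_r.
    replace (p * (p*y1*y1 + 2*q*y1*y2 + r*y2*y2)) with ((p*y1+q*y2)^2 + (p*r - q*q)*(y2*y2)) by ring.
    assert (0 <= (p*y1+q*y2)^2) by apply pow2_ge_0.
    assert (0 <= (p*r - q*q)*(y2*y2)) by (apply Rmult_le_pos; nra).
    lra.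
Qed.

Definition good s M2 := 1 <= M2 /\ s*s <= M2 /\ forall z1 z2,
  ((1+s)*z1*z2)*((1+s)*z1*z2) <= ((M2-1)*(z1*z1+z2*z2)) * ((M2-1)*(z1*z1) + (M2-s*s)*(z2*z2)).

Lemma good_bound s M2 a b c : good s M2 -> (Fs s a b c)*(Fs s a b c) <= M2 * (Nv a * Nv b * Nv c).
Proof.
  destruct a as [x1 x2], b as [y1 y2], c as [z1 z2]. unfold Fs, Nv; simpl.
  intros [H1 [H2 H3]].
  set (w1 := y2*z1 + y1*z2). set (w2 := y1*z1 + s*y2*z2).
  assert (Hw : w1*w1 + w2*w2 <= M2*(y1*y1+y2*y2)*(z1*z1+z2*z2)).
  { pose proof (psd2 ((M2-1)*(z1*z1+z2*z2)) (-(1+s)*z1*z2) ((M2-1)*(z1*z1) + (M2-s*s)*(z2*z2)) y1 y2) as P.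
    assert (E : M2*(y1*y1+y2*y2)*(z1*z1+z2*z2) - (w1*w1 + w2*w2) =
       (M2-1)*(z1*z1+z2*z2)*y1*y1 + 2*(-(1+s)*z1*z2)*y1*y2 + ((M2-1)*(z1*z1) + (M2-s*s)*(z2*z2))*y2*y2)
       by (unfold w1, w2; ring).
    assert (0 <= (M2-1)*(z1*z1+z2*z2)) by (apply Rmult_le_pos; nra).
    assert (0 <= (M2-1)*(z1*z1) + (M2-s*s)*(z2*z2)) by (apply Rplus_le_le_0_compat; apply Rmult_le_pos; nra).
    specialize (H3 z1 z2).
    assert (-(1+s)*z1*z2*(-(1+s)*z1*z2) = ((1+s)*z1*z2)*((1+s)*z1*z2)) by ring.
    lra. }
  assert (EF : x2*y1*z1 + x1*y2*z1 + x1*y1*z2 + s*x2*y2*z2 = x1*w1 + x2*w2) by (unfold w1, w2; ring).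
  rewrite EF.
  assert (HC : (x1*w1 + x2*w2)*(x1*w1 + x2*w2) <= (x1*x1+x2*x2)*(w1*w1+w2*w2)) by (pose proof (pow2_ge_0 (x1*w2 - x2*w1)); nra).
  assert (0 <= x1*x1+x2*x2) by nra.
  assert ((x1*x1+x2*x2)*(w1*w1+w2*w2) <= (x1*x1+x2*x2)*(M2*(y1*y1+y2*y2)*(z1*z1+z2*z2)))
    by (apply Rmult_le_compat_l; auto).
  lra.
Qed.

Lemma good1 s : 2 <= s \/ s <= -1 -> good s (s*s).
Proof.
  intros Hs. split; [destruct Hs; nra|split; [lra|]]. intros z1 z2.
  assert (0 <= s*(s-2)) by (destruct Hs; nra).
  assert (E : ((s*s-1)*(z1*z1+z2*z2)) * ((s*s-1)*(z1*z1) + (s*s-s*s)*(z2*z2)) - ((1+s)*z1*z2)*((1+s)*z1*z2)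
    = ((s*s-1)*(z1*z1))*((s*s-1)*(z1*z1)) + ((1+s)*(1+s)) * (s*(s-2)) * (z1*z1) * (z2*z2)) by ring.
  pose proof (sqn ((s*s-1)*(z1*z1))).
  assert (0 <= ((1+s)*(1+s)) * (s*(s-2)) * (z1*z1) * (z2*z2)).
  { apply Rmult_le_pos; [|apply sqn]. apply Rmult_le_pos; [|apply sqn]. apply Rmult_le_pos; [apply sqn|auto]. }
  lra.
Qed.

Lemma good2 s : -1 <= s <= 2 -> good s (4/(3-s)).
Proof.
  intros Hs. assert (H3 : 0 < 3 - s) by lra.
  assert (HM : 4/(3-s) * (3-s) = 4) by (field; lra).
  split; [|split].
  - apply (Rmult_le_reg_r (3-s)); auto. rewrite HM; lra.
  - apply (Rmult_le_reg_r (3-s)); auto. rewrite HM.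
    assert (0 <= (s+1)*((s-2)*(s-2))) by (apply Rmult_le_pos; nra). nra.
  - intros z1 z2.
    assert (E : ((4/(3-s)-1)*(z1*z1+z2*z2)) * ((4/(3-s)-1)*(z1*z1) + (4/(3-s)-s*s)*(z2*z2)) - ((1+s)*z1*z2)*((1+s)*z1*z2)
      = ((1+s)*(z1*z1 + (s-2)*(z2*z2))/(3-s)) * ((1+s)*(z1*z1 + (s-2)*(z2*z2))/(3-s))) by (field; lra).
    pose proof (sqn ((1+s)*(z1*z1 + (s-2)*(z2*z2))/(3-s))).
    lra.
Qed.

Lemma spec_ub s M : 0 <= M -> good s (M*M) -> forall v, is_simple v -> Rabs (tinner (f_t s) v) <= M * tnorm v.
Proof.
  intros HM Hg v [a [b [c ->]]]. rewrite inner_f_simple, norm_simple.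
  pose proof (good_bound s (M*M) a b c Hg) as B.
  assert (HP : 0 <= Nv a * Nv b * Nv c) by (pose proof (N_pos a); pose proof (N_pos b); pose proof (N_pos c);
     repeat apply Rmult_le_pos; auto).
  rewrite <- (Rabs_pos_eq (M * sqrt (Nv a * Nv b * Nv c))) by (apply Rmult_le_pos; [lra| apply sqrt_pos]).
  apply Rsqr_le_abs_0. unfold Rsqr.
  replace (M * sqrt (Nv a * Nv b * Nv c) * (M * sqrt (Nv a * Nv b * Nv c))) with
    (M*M*(sqrt (Nv a * Nv b * Nv c) * sqrt (Nv a * Nv b * Nv c))) by ring.
  rewrite sqrt_sqrt by auto. lra.
Qed.

Lemma nuc_lb g Cc l : (forall v, is_simple v -> tinner g v <= Cc * tnorm v) -> Forall is_simple l ->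
  tinner g (tsum_list l) <= Cc * fold_right Rplus 0 (map tnorm l).
Proof.
  intros H Hl. induction Hl as [|v l Hv Hl IH]; simpl.
  - rewrite tinner_tzero. lra.
  - rewrite tinner_tadd. specialize (H v Hv). lra.
Qed.

Lemma Rpower32 x : 0 < x -> Rpower x (3/2) = x * sqrt x.
Proof.
  intros Hx. replace (3/2) with (1 + /2) by field. rewrite Rpower_plus, Rpower_1, Rpower_sqrt; auto.
Qed.

Lemma part1 t : (2 <= t \/ t <= -1) -> is_spectral_norm (f_t t) (Rabs t).
Proof.
  intros Ht. split.
  - exists (simple3 e2 e2 e2). split; [exists e2, e2, e2; reflexivity|split].
    + rewrite norm_simple. unfold Nv, e2; simpl. replace ((0*0+1*1)*(0*0+1*1)*(0*0+1*1)) with 1 by ring. apply sqrt_1.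
    + rewrite inner_f_simple. unfold Fs, e2; simpl. f_equal; ring.
  - intros x [v [Hv [Hn ->]]].
    assert (HM : good t (Rabs t * Rabs t)).
    { rewrite <- Rabs_mult, Rabs_pos_eq by apply sqn. apply good1; auto. }
    pose proof (spec_ub t (Rabs t) (Rabs_pos t) HM v Hv). rewrite Hn in H. lra.
Qed.

Lemma part2 t : (-1 <= t <= 2) -> is_spectral_norm (f_t t) (2 / sqrt (3 - t)).
Proof.
  intros Ht. assert (H3 : 0 < 3 - t) by lra.
  set (u := sqrt (3 - t)). assert (Hu : 0 < u) by (apply sqrt_lt_R0; lra).
  assert (Huu : u*u = 3 - t) by (apply sqrt_sqrt; lra).
  set (g := sqrt (2 - t)). assert (Hgg : g*g = 2 - t) by (apply sqrt_sqrt; lra).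
  split.
  - set (x := (g/u, 1/u)).
    exists (simple3 x x x). split; [exists x, x, x; reflexivity|split].
    + rewrite norm_simple. unfold Nv, x; simpl.
      assert (E : g / u * (g / u) + 1 / u * (1 / u) = (g*g+1)/(u*u)) by (field; lra).
      rewrite E, Hgg, Huu. replace ((2 - t + 1) / (3 - t)) with 1 by (field; lra).
      rewrite !Rmult_1_l. apply sqrt_1.
    + rewrite inner_f_simple. unfold Fs, x; simpl.
      assert (E : 1 / u * (g / u) * (g / u) + g / u * (1 / u) * (g / u) + g / u * (g / u) * (1 / u) +
           t * (1 / u) * (1 / u) * (1 / u) = (3*(g*g) + t) / (u*(u*u))) by (field; lra).
      rewrite E, Hgg, Huu. replace ((3 * (2 - t) + t) / (u * (3 - t))) with (2/u) by (field; lra).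
      rewrite Rabs_pos_eq; auto. apply Rlt_le, Rdiv_lt_0_compat; lra.
  - intros y [v [Hv [Hn ->]]].
    assert (HM : good t (2/u * (2/u))).
    { replace (2/u*(2/u)) with (4/(u*u)) by (field; lra). rewrite Huu. apply good2; auto. }
    assert (0 <= 2/u) by (apply Rlt_le, Rdiv_lt_0_compat; lra).
    pose proof (spec_ub t (2/u) H HM v Hv). rewrite Hn in H0. lra.
Qed.

Definition sc (l : R) (u : vec2) : vec2 := (l * fst u, l * snd u).

Lemma norm_sc l u : Nv u = 1 -> 0 <= l -> tnorm (simple3 (sc l u) u u) = l.
Proof.
  intros Hu Hl. rewrite norm_simple. replace (Nv (sc l u)) with (l*l*Nv u) by (unfold Nv, sc; simpl; ring).
  rewrite Hu. replace (l*l*1*1*1) with (l*l) by ring. apply sqrt_square; auto.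
Qed.

Lemma simple_sc l u : is_simple (simple3 (sc l u) u u).
Proof. exists (sc l u), u, u; reflexivity. Qed.

Lemma part3 t : t <= 1/3 -> is_nuclear_norm (f_t t) (3 - t).
Proof.
  intros Ht. split.
  - set (h := sqrt 3 / 2).
    assert (Hh : h*h = 3/4) by (unfold h; replace (sqrt 3 / 2 * (sqrt 3 / 2)) with (sqrt 3 * sqrt 3 / 4) by field;
       rewrite sqrt_sqrt; lra).
    set (u1 := (h, 1/2)). set (u2 := (-h, 1/2)). set (u3 := (0, -1)).
    assert (N1 : Nv u1 = 1) by (unfold Nv, u1; simpl; lra).
    assert (N2 : Nv u2 = 1) by (unfold Nv, u2; simpl; lra).
    assert (N3 : Nv u3 = 1) by (unfold Nv, u3; simpl; lra).
    exists (simple3 (sc (4/3) u1) u1 u1 :: simple3 (sc (4/3) u2) u2 u2 :: simple3 (sc (1/3 - t) u3) u3 u3 :: nil).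
    split; [repeat constructor; apply simple_sc|split].
    + apply functional_extensionality; intro i; apply functional_extensionality; intro j;
      apply functional_extensionality; intro k.
      destruct i, j, k; unfold tsum_list, f_t, tadd, tscale, tzero, simple3, sc, comp, e1, e2, u1, u2, u3; simpl; nra.
    + simpl. rewrite !norm_sc by (auto; lra). lra.
  - intros x [l [Hl [Heq ->]]].
    assert (H : forall v, is_simple v -> tinner (f_t (-1)) v <= 1 * tnorm v).
    { intros v Hv. assert (G : good (-1) (1*1)).
      { replace (1*1) with ((-1)*(-1)) by ring. apply good1. lra. }
      pose proof (spec_ub (-1) 1 ltac:(lra) G v Hv). pose proof (Rle_abs (tinner (f_t (-1)) v)). lra. }
    pose proof (nuc_lb _ _ _ H Hl) as B. rewrite <- Heq, inner_ff in B. lra.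
Qed.

Lemma part4 t : 1/3 <= t -> is_nuclear_norm (f_t t) (Rpower (1 + t) (3/2) / sqrt t).
Proof.
  intros Ht. assert (Ht0 : 0 < t) by lra.
  set (r := sqrt (1+t)). set (q := sqrt t).
  assert (Hr : 0 < r) by (apply sqrt_lt_R0; lra). assert (Hq : 0 < q) by (apply sqrt_lt_R0; lra).
  assert (Hrr : r*r = 1+t) by (apply sqrt_sqrt; lra). assert (Hqq : q*q = t) by (apply sqrt_sqrt; lra).
  rewrite Rpower32 by lra. fold r q.
  assert (Val : (1+t)*r/q = r*r*r/q) by (rewrite Hrr; reflexivity).
  rewrite Val.
  split.
  - set (c := /r). set (y := q/r). set (lam := r*r*r/(2*q)).
    assert (F1 : c*c + y*y = 1).
    { unfold c, y. replace (/ r * / r + q / r * (q / r)) with ((1 + q*q)/(r*r)) by (field; lra).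
      rewrite Hqq, Hrr. field. lra. }
    assert (F2 : y*y = t*(c*c)).
    { unfold c, y. replace (q / r * (q / r)) with ((q*q)/(r*r)) by (field; lra). rewrite Hqq. field. lra. }
    assert (F3 : 2*lam*(c*c)*y = 1).
    { unfold lam, c, y. field. lra. }
    assert (Hl : 0 <= lam) by (unfold lam; apply Rlt_le, Rdiv_lt_0_compat; nra).
    set (w1 := (c, y)). set (w2 := (-c, y)).
    assert (N1 : Nv w1 = 1) by (unfold Nv, w1; simpl; lra).
    assert (N2 : Nv w2 = 1) by (unfold Nv, w2; simpl; lra).
    exists (simple3 (sc lam w1) w1 w1 :: simple3 (sc lam w2) w2 w2 :: nil).
    split; [repeat constructor; apply simple_sc|split].
    + apply functional_extensionality; intro i; apply functional_extensionality; intro j;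
      apply functional_extensionality; intro k.
      destruct i, j, k; unfold tsum_list, f_t, tadd, tscale, tzero, simple3, sc, comp, e1, e2, w1, w2; simpl; try ring; try nra.
      replace (lam * y * y * y + (lam * y * y * y + 0)) with (2*lam*y*(y*y)) by ring.
      rewrite F2. replace (2 * lam * y * (t * (c * c))) with (t * (2*lam*(c*c)*y)) by ring. rewrite F3. ring.
    + simpl. rewrite !norm_sc by auto. unfold lam. field. lra.
  - intros x [l [Hl [Heq ->]]].
    set (s := 2 - /t).
    assert (Hi : t * /t = 1) by (field; lra).
    assert (Hit : 0 < /t) by (apply Rinv_0_lt_compat; lra).
    assert (Hit3 : 0 <= (t - 1/3) * /t) by (apply Rmult_le_pos; lra).
    assert (Hs : -1 <= s <= 2) by (unfold s; split; lra).
    assert (HM : 0 <= 2*q/r) by (apply Rlt_le, Rdiv_lt_0_compat; lra).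
    assert (G : good s (2*q/r*(2*q/r))).
    { replace (2*q/r*(2*q/r)) with (4/(3-s)). { apply good2; auto. }
      unfold s. replace (2*q/r*(2*q/r)) with (4*(q*q)/(r*r)) by (field; lra). rewrite Hqq, Hrr.
      field. lra. }
    assert (H : forall v, is_simple v -> tinner (f_t s) v <= 2*q/r * tnorm v).
    { intros v Hv. pose proof (spec_ub s _ HM G v Hv). pose proof (Rle_abs (tinner (f_t s) v)). lra. }
    pose proof (nuc_lb _ _ _ H Hl) as B. rewrite <- Heq, inner_ff in B.
    replace (3 + s*t) with (2*(r*r)) in B by (unfold s; rewrite Hrr; field; lra).
    apply (Rmult_le_reg_l (2*q/r)). { apply Rdiv_lt_0_compat; lra. }
    replace (2*q/r*(r*r*r/q)) with (2*(r*r)) by (field; lra). exact B.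
Qed.

Theorem mainTheorem19 (t : R) :
  ((2 <= t \/ t <= -1) -> is_spectral_norm (f_t t) (Rabs t)) /\
  ((-1 <= t <= 2) -> is_spectral_norm (f_t t) (2 / sqrt (3 - t))) /\
  (t <= 1/3 -> is_nuclear_norm (f_t t) (3 - t)) /\
  (1/3 <= t -> is_nuclear_norm (f_t t) (Rpower (1 + t) (3/2) / sqrt t)).
Proof.
  split; [apply part1|split; [apply part2|split; [apply part3|apply part4]]].
Qed.
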